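(* Let $i\ge 2$ and let $c_0,\dots,c_{i-1}$ be the vertices of a cycle, each with a positive weight $w(c_j)$. Run the following procedure (BalanceInCycle): initialize $b_{OPT}\gets 0$, a queue $Q_1$ empty and a queue $Q_2$ containing $c_0,c_1,\dots,c_{i-1}$ in this order (head $c_0$). Repeat the following iteration until $c_0$ becomes the head of $Q_1$ for the second time: update $b_{OPT}\gets\max\{b_{OPT},\min(w(Q_1),w(Q_2))\}$; then, if $w(Q_1)>w(Q_2)$, dequeue the head of $Q_1$ and append it to the tail of $Q_2$, otherwise dequeue the head of $Q_2$ and append it to the tail of $Q_1$. Then this procedure terminates after $O(i)$ steps.
   Context: $w(Q)$ denotes the sum of the weights of the elements currently in queue $Q$. Queues are FIFO: elements are appended at the tail and removed at the head. (In the paper's application, the $c_j$ are the vertices of a cycle in the cactus representation of all minimum cuts of a graph, and $w(c_j)$ is the number of original graph vertices in the sub-cactus hanging off $c_j$.) *)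

(* Defs.v *)
From mathcomp Require Import all_boot all_order all_algebra.
Set Implicit Arguments. Unset Strict Implicit. Unset Printing Implicit Defensive.
Import Order.TTheory GRing.Theory Num.Theory.
Local Open Scope ring_scope.

(* Cycle vertices c_0, ..., c_{i-1} are represented by the naturals 0..i-1;
   a weight function is w : nat -> R (only its values on 0..i-1 matter). *)

(* w(Q): total weight of the elements currently in queue Q
   (a queue is a seq, head = first element, tail = last element). *)
Definition wQ (R : realDomainType) (w : nat -> R) (q : seq nat) : R :=
  \sum_(x <- q) w x.

Definition bic_state (R : realDomainType) := (R * seq nat * seq nat)%type.

Definition bic_step (R : realDomainType) (w : nat -> R) (s : bic_state R)
  : bic_state R :=
  let: (b, q1, q2) := s in
  let b' := Num.max b (Num.min (wQ w q1) (wQ w q2)) in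
  if wQ w q2 < wQ w q1 then
    match q1 with
    | x :: t => (b', t, rcons q2 x)
    | [::] => (b', q1, q2)
    end
  else
    match q2 with
    | x :: t => (b', rcons q1 x, t)
    | [::] => (b', q1, q2)
    end.

Definition bic_init (R : realDomainType) (i : nat) : bic_state R :=
  (0, [::], iota 0 i).

Definition bic_iter (R : realDomainType) (w : nat -> R) (i k : nat) : bic_state R :=
  iter k (bic_step w) (bic_init R i).

Definition headQ1 (R : realDomainType) (s : bic_state R) : option nat :=
  ohead s.1.2.

(* c_0 becomes the head of Q1 at (the end of) iteration k >= 1:
   it is the head of Q1 after k iterations but was not after k-1. *)
Definition c0_becomes_head (R : realDomainType) (w : nat -> R) (i k : nat) : bool :=
  (headQ1 (bic_iter w i k) == Some 0%N) &&
  (headQ1 (bic_iter w i k.-1) != Some 0%N).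

(* The loop stops after exactly T iterations iff at iteration T, c_0 becomes
   the head of Q1 for the second time. *)
Definition bic_stops_after (R : realDomainType) (w : nat -> R) (i T : nat) : Prop :=
  c0_becomes_head w i T /\
  count (c0_becomes_head w i) (iota 1 T) = 2%N.

(* Main.v *)
Require Import Defs.
From mathcomp Require Import all_boot all_order all_algebra.
From mathcomp Require Import zify ring lra.
Import Order.TTheory GRing.Theory Num.Theory.

Section Bic.
Variable R : realDomainType.
Variable i : nat.
Variable w : nat -> R.
Hypothesis i2 : (2 <= i)%N.
Hypothesis wpos : forall j : nat, (j < i)%N -> (0 < w j)%R.

Definition mQ (a n : nat) := [seq (j %% i)%N | j <- iota a n].
Definition Q1 (a k : nat) := mQ a k.
Definition Q2 (a k : nat) := mQ (a + k) (i - k).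

Lemma wQ_ge0 a n : (0 <= wQ w (mQ a n))%R.
Proof.
rewrite /wQ /mQ big_map; apply: sumr_ge0 => j _; apply: ltW; apply: wpos.
apply: ltn_pmod; lia.
Qed.

Lemma wQ_gt0 a n : (0 < n)%N -> (0 < wQ w (mQ a n))%R.
Proof.
case: n => [//|n] _; rewrite /mQ /= /wQ big_cons.
have h1 : (0 < w (a %% i))%R by apply: wpos; apply: ltn_pmod; lia.
have h2 := wQ_ge0 a.+1 n; rewrite /wQ /mQ in h2.
lra.
Qed.

Fixpoint ak (n : nat) : nat * nat :=
  match n with
  | 0 => (0, 0)
  | n'.+1 => let (a, k) := ak n' in
      if (wQ w (Q2 a k) < wQ w (Q1 a k))%R then (a.+1, k.-1) else (a, k.+1)
  end.

Lemma sim n : [/\ (bic_iter w i n).1.2 = Q1 (ak n).1 (ak n).2,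
  (bic_iter w i n).2 = Q2 (ak n).1 (ak n).2,
  ((ak n).2 <= i)%N & ((ak n).1 * 2 + (ak n).2 = n)%N].
Proof.
elim: n => [|n IH].
  split => //=. rewrite /Q2 /mQ subn0 addn0 /= -[LHS]map_id; apply/eq_in_map => j.
  by rewrite mem_iota => /andP [_ h]; rewrite modn_small.
rewrite /bic_iter iterS -/(bic_iter w i n) [ak n.+1]/=.
move: IH; case: (ak n) => a k; case: (bic_iter w i n) => [[b q1] q2] /= [-> -> hk e].
rewrite /bic_step; case: ifP => h.
- case: k hk e h => [|k] hk e h.
    by exfalso; move: h; rewrite /Q1 /wQ /mQ /= big_nil; have := wQ_ge0 (a+0) (i-0); rewrite /wQ; lra.
  rewrite [Q1 a k.+1]/Q1 /mQ /=; split => //; try lia.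
  rewrite /Q2 /mQ.
  have -> : (a.+1 + k = a + k.+1)%N by lia.
  have -> : (i - k = (i - k.+1) + 1)%N by lia.
  rewrite iotaD map_cat cats1 /=; congr (rcons _ _); have -> : (a + k.+1 + (i - k.+1) = a + i)%N by lia. by rewrite modnDr.
- have hki : (k < i)%N.
    case: (ltnP k i) => // hik; have ek : k = i by lia. subst k.
    move: h; rewrite /Q2 subnn /mQ /= /wQ big_nil.
    by have := wQ_gt0 a i ltac:(lia); rewrite /wQ /Q1 => ->.
  rewrite [Q2 a k]/Q2 /mQ; have -> : (i - k = (i - k.+1).+1)%N by lia.
  rewrite /=; split => //; last lia.
    by rewrite /Q1 /mQ -addn1 iotaD map_cat cats1.
  by rewrite /Q2 /mQ addnS.
Qed.

Definition A n := (ak n).1.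
Definition K n := (ak n).2.

Lemma A_step n : A n.+1 = A n \/ A n.+1 = (A n).+1.
Proof. rewrite /A /=; case: (ak n) => a k; case: ifP => _ /=; tauto. Qed.

Lemma K0_step n : K n = 0%N -> A n.+1 = A n /\ K n.+1 = 1%N.
Proof.
rewrite /A /K /=; case: (ak n) => a k /= ->; case: ifP => // h; exfalso; move: h.
by rewrite /Q1 /mQ /= /wQ big_nil; have := wQ_ge0 (a+0) (i-0); rewrite /wQ /Q2; lra.
Qed.

Lemma A_mono m n : (m <= n)%N -> (A m <= A n)%N.
Proof.
move=> /subnK <-; elim: (n - m)%N => [//|d IH].
rewrite addSn; case: (A_step (d + m)) => ->; lia.
Qed.

Lemma AK n : (A n * 2 + K n = n)%N /\ (K n <= i)%N.
Proof. by case: (sim n) => _ _ ? ?. Qed.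

Definition P n := (0 < K n)%N && (A n %% i == 0)%N.

Lemma headP n : (headQ1 (bic_iter w i n) == Some 0%N) = P n.
Proof.
rewrite /headQ1; case: (sim n) => -> _ _ _; rewrite /P /= /Q1 /mQ -/(A n) -/(K n).
by case: (K n) => [|k] //=.
Qed.

Lemma ivt N : (i <= A N)%N -> exists n, A n = i.
Proof.
elim: N => [|N IH]; first by rewrite /A /=; lia.
move=> h; case: (leqP i (A N)) => h2; first exact: IH.
by exists N.+1; case: (A_step N) => e; lia.
Qed.

Lemma exT : exists n, (A n == i) && (0 < K n)%N.
Proof.
have [n hn] : exists n, A n = i.
  apply: (ivt (3 * i)); case: (AK (3 * i)); lia.
case: (posnP (K n)) => hk.
  exists n.+1; case: (@K0_step n hk) => -> ->; rewrite hn eqxx //.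
by exists n; rewrite hn eqxx hk.
Qed.

Lemma main : exists T, (T <= 3 * i)%N /\ bic_stops_after w i T.
Proof.
case: (ex_minnP exT) => T /andP [/eqP hAT hKT] hmin.
have [eT kT] := AK T.
exists T; split; first lia.
have hc k : c0_becomes_head w i k = P k && ~~ P k.-1.
  by rewrite /c0_becomes_head !headP.
have Pm m : (m < T)%N -> P m -> A m = 0%N.
  move=> hm /andP [hk hmod].
  have := @A_mono m T (ltnW hm); rewrite hAT => hle.
  case: (ltnP (A m) i) => h.
    by move: hmod; rewrite modn_small // => /eqP.
  have : (T <= m)%N by apply: hmin; rewrite hk andbT; apply/eqP; lia.
  lia.
have PT : P T by rewrite /P hKT hAT modnn eqxx.
have T2 : (2 <= T)%N by lia.
have nPT1 : ~~ P T.-1.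
  apply/negP => /(Pm T.-1 ltac:(lia)) h0.
  have := A_step T.-1; rewrite (ltn_predK (m:=0)) ?hAT; lia.
have hA1 : ak 1 = (0%N, 1%N).
  rewrite /=; case: ifP => // h; exfalso; move: h.
  by rewrite /Q1 /mQ /= /wQ big_nil; have := wQ_ge0 (0+0) (i-0); rewrite /wQ /Q2; lra.
have P1 : P 1 by rewrite /P /K /A hA1 mod0n.
have nP0 : ~~ P 0 by [].
split; first by rewrite hc PT nPT1.
rewrite (_ : T = 1 + (T - 2) + 1)%N; last lia.
rewrite !iotaD !count_cat /= !hc P1 nP0 /=.
have -> : (1 + (1 + (T - 2)) = T)%N by lia.
have -> : (0 + (1 + (T - 2)) = T.-1)%N by lia.
rewrite PT nPT1 /= !addn0.
have -> : (1 + 1 = 2)%N by [].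
have -> : count (c0_becomes_head w i) (iota 2 (T - 2)) = 0%N.
  apply/eqP; rewrite -leqn0 leqNgt -has_count; apply/hasP => [[m]].
  rewrite mem_iota hc => /andP [m2 mT] /andP [pm npm].
  have h0 := Pm m ltac:(lia) pm.
  move: npm; rewrite /P.
  have := @A_mono m.-1 m (leq_pred m); rewrite h0 leqn0 => /eqP h1.
  have := AK m.-1; rewrite h1 /= => [[e _]].
  move=> /negP; apply; rewrite mod0n eqxx andbT.
  have -> : K m.-1 = m.-1 by move: e; rewrite mul0n add0n.
  by case: (m) m2 => [|[|m0]].
by [].
Qed.

End Bic.

Local Open Scope ring_scope.

Theorem lemma3 :
  exists C : nat,
    forall (R : realDomainType) (i : nat) (w : nat -> R),
      (2 <= i)%N ->
      (forall j : nat, (j < i)%N -> 0 < w j) ->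
      exists T : nat, (T <= C * i)%N /\ bic_stops_after w i T.
Proof.
exists 3%N => R i w hi hw; exact: main.
Qed.
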